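(* Let $X=(X_1,\ldots,X_q)^T$ be a vector of mutually independent Poisson random variables with positive means $\lambda=(\lambda_1,\ldots,\lambda_q)^T$. Let $A \in \{0,1\}^{\ell\times q}$ have pairwise distinct nonzero columns, let $Y=AX$, and let $K_Y(t)=\log E[e^{t^TY}]$. Let $\mathcal B=\{0,1\}^\ell$, $\mathcal B_0=\mathcal B\setminus\{0\}$, with the componentwise order $\le$; let $\mathcal A\subseteq\mathcal B_0$ be the set of columns of $A$ and $\rho(a_{*,j})=\lambda_j$, $\rho(v)=0$ for $v\notin\mathcal A$. For $v\in\mathcal B_0$ with support $\{i_1<\cdots<i_p\}$ let $\phi(v)=\frac{\partial^p}{\partial t_{i_1}\cdots\partial t_{i_p}}K_Y(t)\big|_{t=0}$. For $v\in\mathcal B$, a successor of $v$ is $w\in\mathcal B_0$ with $v<w$ and no $z\in\mathcal B_0$ with $v<z<w$; write $\rightarrow v$ for the set of successors. Run the following algorithm: (1) set $\mathcal Q=(0,\ldots,0)^T$ (a FIFO queue containing the zero vector) and $\mathcal V=\varnothing$; (2) remove the first element $v$ from $\mathcal Q$; (3) for each $w\in\rightarrow v$ with $\phi(w)>0$ that is not already the first component of a pair in $\mathcal V$, append $w$ to $\mathcal Q$ and add $(w,\phi(w))$ to $\mathcal V$; (4) if $\mathcal Q\neq\varnothing$ go to (2), otherwise stop. At termination write $\mathcal V=\{(w_1,\phi(w_1)),\ldots,(w_k,\phi(w_k))\}$, $\mathcal S=(w_1,\ldots,w_k)$, let $M_{\mathcal S}\in\{0,1\}^{k\times k}$ be given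 by $(M_{\mathcal S})_{i,j}=1$ iff $w_i\le w_j$, define $(\psi(w_1),\ldots,\psi(w_k))^T = M_{\mathcal S}^{-1}(\phi(w_1),\ldots,\phi(w_k))^T$, and $\hat{\mathcal A}=\{w_i:\psi(w_i)>0\}$. Then: (1) $\mathcal V=\{(w,\phi(w)) : w\in\mathcal B_0,\ \phi(w)>0\}$; (2) $\hat{\mathcal A}=\mathcal A$ and $\psi(v)=\rho(v)$ for every $v\in\mathcal A$.
   Context: $a_{*,j}$ is the $j$-th column of $A$; $w<v$ means $w\le v$ and $w\ne v$ in the componentwise order. $M_{\mathcal S}$ is invertible since the $w_i$ are distinct. *)

(* Defs.v *)
From HB Require Import structures.
From mathcomp Require Import all_boot all_order all_algebra.
From mathcomp Require Import all_classical all_reals all_analysis.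

Set Implicit Arguments.
Unset Strict Implicit.
Unset Printing Implicit Defensive.

Import Order.TTheory GRing.Theory Num.Theory.
Import numFieldNormedType.Exports.

Local Open Scope classical_set_scope.
Local Open Scope ring_scope.

(* Mutual independence of a finite family of (nat-valued) random variables:
   joint probability of any family of measurable events is the product.
   (Taking B j = setT for j outside a subfamily gives the product rule for
   every finite subfamily.) *)
Definition mutually_independent d (T : measurableType d) (R : realType)
  (P : probability T R) (q : nat) (X : 'I_q -> {RV P >-> nat}) : Prop :=
  forall B : 'I_q -> set nat, (forall j, measurable (B j)) ->
    P (\bigcap_j (X j @^-1` B j)) = (\prod_j P (X j @^-1` B j))%E.

Definition is_poisson d (T : measurableType d) (R : realType)
  (P : probability T R) (lam : R) (X : {RV P >-> nat}) : Prop :=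
  forall n : nat, P (X @^-1` [set n]) = (poisson_pmf lam n)%:E.

Notation bvec l := {ffun 'I_l -> bool}.

Definition ble l (v w : bvec l) : bool := [forall i, v i ==> w i].
Definition blt l (v w : bvec l) : bool := ble v w && (v != w).

Definition bzero l : bvec l := [ffun => false].

Definition bcol l q (A : 'M[bool]_(l, q)) (j : 'I_q) : bvec l :=
  [ffun i => A i j].

Definition Yvec d (T : measurableType d) (R : realType) (P : probability T R)
  l q (A : 'M[bool]_(l, q)) (X : 'I_q -> {RV P >-> nat}) (i : 'I_l) (w : T)
  : nat := (\sum_(j < q) (A i j : nat) * X j w)%N.

Definition KY d (T : measurableType d) (R : realType) (P : probability T R)
  l q (A : 'M[bool]_(l, q)) (X : 'I_q -> {RV P >-> nat}) (t : 'rV[R]_l) : R :=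
  ln (fine ('E_P[fun w => expR (\sum_(i < l) t 0 i * (Yvec A X i w)%:R)])).

Definition partial (R : realType) l (i : 'I_l) (f : 'rV[R]_l -> R)
  : 'rV[R]_l -> R := fun t => derive f t (delta_mx 0 i).

Definition phi (R : realType) l (K : 'rV[R]_l -> R) (v : bvec l) : R :=
  (foldr (@partial R l) K (enum [pred i | v i])) 0.

Definition is_succ l (v w : bvec l) : bool :=
  [&& w != bzero l, blt v w &
      ~~ [exists z : bvec l, [&& z != bzero l, blt v z & blt z w]]].

(* The algorithm: state = (queue Q, list V of pairs in insertion order). *)
Definition alg_step (R : realType) l (ph : bvec l -> R)
  (st : seq (bvec l) * seq (bvec l * R)) : seq (bvec l) * seq (bvec l * R) :=
  match st.1 with
  | [::] => st
  | v :: Q =>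
      foldl (fun (s : seq (bvec l) * seq (bvec l * R)) (w : bvec l) =>
               if is_succ v w && (0 < ph w) && (w \notin map fst s.2)
               then (rcons s.1 w, rcons s.2 (w, ph w)) else s)
            (Q, st.2) (enum (bvec l))
  end.

Definition alg_state (R : realType) l (ph : bvec l -> R) (n : nat)
  : seq (bvec l) * seq (bvec l * R) :=
  iter n (alg_step ph) ([:: bzero l], [::]).

Definition MS (R : realType) l (S : seq (bvec l)) : 'M[R]_(size S) :=
  \matrix_(i < size S, j < size S)
    (ble (nth (bzero l) S i) (nth (bzero l) S j))%:R.

Definition psi_vec (R : realType) l (V : seq (bvec l * R)) : 'cV[R]_(size (map fst V)) :=
  invmx (MS R (map fst V)) *m
    \col_(i < size (map fst V)) (nth (bzero l, 0) V i).2.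

(* Main.v *)
Require Import Defs.
From HB Require Import structures.
From mathcomp Require Import all_boot all_order all_algebra.
From mathcomp Require Import all_classical all_reals all_analysis.
Import Order.TTheory GRing.Theory Num.Theory.
Import numFieldNormedType.Exports.
From mathcomp Require Import ring measurable_realfun.
Local Open Scope ring_scope.
Set Implicit Arguments.
Unset Strict Implicit.
Unset Printing Implicit Defensive.
Local Open Scope classical_set_scope.
Local Open Scope ring_scope.
Section D.
Variables (R : realType) (l q : nat) (A : 'M[bool]_(l, q)).
Definition sj (t : 'rV[R]_l) (j : 'I_q) : R := \sum_i t 0 i * (A i j)%:R.

Lemma sj_shift (t : 'rV[R]_l) i j (h : R) :
  sj (h *: delta_mx 0 i + t) j = h * (A i j)%:R + sj t j.
Proof.
rewrite /sj (eq_bigr (fun k => h * ((k == i)%:R * (A k j)%:R) + t 0 k * (A k j)%:R)); last first.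
  by move=> k _; rewrite !mxE eqxx /= mulrDl mulrA.
rewrite big_split /= -mulr_sumr; congr (_ * _ + _).
rewrite (bigD1 i) //= eqxx mul1r big1 ?addr0 // => k /negbTE ->; by rewrite mul0r.
Qed.

Lemma derive_exp_lin (a c : R) : derive (fun h : R => expR (h * c + a)) 0 1 = c * expR a.
Proof.
have := @derive1_comp R (fun h => h * c + a) expR 0.
rewrite !derive1E.
have hl : is_derive (0:R) 1 (fun h : R => h * c + a) c.
  by apply: is_derive_eq; rewrite scaler0 add0r addr0 /GRing.scale /= mulr1.
move=> H; rewrite -[LHS]/('D_1 (expR \o (fun h : R => h * c + a)) 0) H; last 2 first.
- exact: ex_derive.
- exact: ex_derive.
rewrite mul0r add0r derive_val.
have -> : 'D_1 (fun h : R => h * c + a) 0 = c by apply: derive_val.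
by rewrite mulrC.
Qed.

Lemma derivable_exp_lin (a c x : R) : derivable (fun h : R => expR (h * c + a)) x 1.
Proof.
apply/derivable1_diffP.
apply: (@differentiable_comp _ _ _ _ (fun h : R => h * c + a) expR).
- apply/derivable1_diffP.
  have hl : is_derive x 1 (fun h : R => h * c + a) c.
    by apply: is_derive_eq; rewrite scaler0 add0r addr0 /GRing.scale /= mulr1.
  exact: ex_derive.
- apply/derivable1_diffP; exact: ex_derive.
Qed.

Global Instance is_derive_exp_lin (a c : R) :
  is_derive (0:R) 1 (fun h : R => expR (h * c + a)) (c * expR a).
Proof. split; [exact: derivable_exp_lin | exact: derive_exp_lin]. Qed.

Lemma partial_expsum (c : 'I_q -> R) (d : R) i (t : 'rV[R]_l) :
  partial i (fun t => \sum_j c j * expR (sj t j) + d) t =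
  \sum_j (c j * (A i j)%:R) * expR (sj t j).
Proof.
pose g := fun h : R => \sum_j c j * expR (h * (A i j)%:R + sj t j) + d.
have H : is_derive (0:R) 1 g (\sum_j (c j * (A i j)%:R) * expR (sj t j)).
  have Hj : forall j, is_derive (0:R) 1 (fun h : R => c j * expR (h * (A i j)%:R + sj t j))
      (c j * ((A i j)%:R * expR (sj t j))).
    by move=> j; apply: is_deriveZ.
  have Hs := is_derive_sum Hj.
  have Hd := is_deriveD Hs (is_derive_cst d (0:R) (1:R)).
  have -> : g = (\sum_(j < q) (fun h : R => c j * expR (h * (A i j)%:R + sj t j))) + cst d.
    by apply/funext => h; rewrite /g /= fct_sumE.
  apply: is_derive_eq; rewrite addr0; apply: eq_bigr => j _; by rewrite mulrA.
rewrite /partial /derive.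
have -> : (fun h : R => h^-1 *: (((fun t => \sum_j c j * expR (sj t j) + d) \o shift t) (h *: delta_mx 0 i) -
   (\sum_j c j * expR (sj t j) + d))) =
  (fun h : R => h^-1 *: ((g \o shift 0) (h *: (1:R)) - g 0)).
  apply/funext => h /=. rewrite addr0 /GRing.scale /= mulr1 /g.
  congr (_ *: (_ - _)); congr (_ + _); apply: eq_bigr => j _.
    by rewrite sj_shift.
  by rewrite mul0r add0r.
exact: (@derive_val _ _ _ _ _ _ _ H).
Qed.
End D.
Section P.
Variables (R : realType) (l q : nat) (A : 'M[bool]_(l, q)).

Lemma foldr_partial (lam : 'I_q -> R) (K : 'rV[R]_l -> R)
  (HK : forall t, K t = \sum_j lam j * (expR (sj A t j) - 1)) (s : seq 'I_l) :
  foldr (@partial R l) K s = fun t =>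
    \sum_j (lam j * \prod_(i <- s) (A i j)%:R) * expR (sj A t j) +
    (if s is [::] then - \sum_j lam j else 0).
Proof.
elim: s => [|i s IH] /=.
  apply/funext => t; rewrite HK.
  rewrite (eq_bigr (fun j => lam j * expR (sj A t j) - lam j)); last first.
    by move=> j _; rewrite mulrBr mulr1.
  by rewrite sumrB; congr (_ - _); apply: eq_bigr => j _; rewrite big_nil mulr1.
rewrite IH; apply/funext => t; rewrite partial_expsum addr0.
apply: eq_bigr => j _; rewrite big_cons.
by rewrite [(A i j)%:R * _]mulrC !mulrA.
Qed.

Lemma prod_ble (v : bvec l) j :
  \prod_(i <- enum [pred i | v i]) ((A i j)%:R : R) = (ble v (bcol A j))%:R.
Proof.
rewrite big_enum /=.
case: (boolP (ble v (bcol A j))) => H.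
  rewrite big1 // => i vi; move/forallP: H => /(_ i); rewrite ffunE.
  by move: vi; rewrite inE => -> /= ->.
have [i /andP[vi nA]] : exists i, v i && ~~ A i j.
  apply/existsP; move: H; rewrite /ble negb_forall => /existsP[i Hi].
  by apply/existsP; exists i; move: Hi; rewrite ffunE negb_imply.
by rewrite (bigD1 i) //= (negbTE nA) mul0r.
Qed.

Lemma phi_formula (lam : 'I_q -> R) (K : 'rV[R]_l -> R)
  (HK : forall t, K t = \sum_j lam j * (expR (sj A t j) - 1)) (v : bvec l) :
  v != bzero l -> phi K v = \sum_j lam j * (ble v (bcol A j))%:R.
Proof.
move=> v0; rewrite /phi (foldr_partial HK).
have [i vi] : exists i, v i.
  apply/existsP; apply: contraNT v0; rewrite negb_exists => /forallP H.
  by apply/eqP/ffunP => i; rewrite ffunE; apply/negbTE.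
have hsj : forall j, sj A (0 : 'rV[R]_l) j = 0.
  by move=> j; rewrite /sj big1 // => k _; rewrite mxE mul0r.
case E: (enum [pred i | v i]) => [|i0 s].
  by have := mem_enum [pred i | v i] i; rewrite E in_nil unfold_in /= vi.
rewrite /= addr0 -E; apply: eq_bigr => j _.
by rewrite hsj expR0 mulr1 prod_ble.
Qed.
End P.

Lemma cvg_pois_series (R : realType) (lam c : R) : 0 < lam ->
  (fun N => \sum_(m < N) c ^+ m * poisson_pmf lam m) @ \oo --> expR (lam * (c - 1)).
Proof.
move=> lam0.
have -> : (fun N => \sum_(m < N) c ^+ m * poisson_pmf lam m) =
    (fun N => expR (- lam) * series (exp_coeff (c * lam)) N).
  apply/funext => N; rewrite /series /= big_mkord mulr_sumr; apply: eq_bigr => m _.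
  rewrite /poisson_pmf lam0 /exp_coeff /= exprMn.
  by ring.
have -> : expR (lam * (c - 1)) = expR (- lam) * expR (c * lam).
  by rewrite -expRD; congr expR; ring.
apply: cvgMr; exact: is_cvg_series_exp_coeff.
Qed.

Section E.
Context d (T : measurableType d) (R : realType) (P : probability T R) (q : nat)
  (X : 'I_q -> {RV P >-> nat}) (lam : 'I_q -> R).
Hypotheses (lam0 : forall j, 0 < lam j) (HX : forall j, is_poisson (lam j) (X j))
  (HI : mutually_independent X).

Lemma measurable_natfun (h : nat -> R) j : measurable_fun setT (fun w => h (X j w)).
Proof. by apply: measurableT_comp => //. Qed.

Lemma sum_ind (a : nat -> R) (x N : nat) :
  \sum_(m < N.+1) a m * (x == m)%:R = if (x <= N)%N then a x else 0.
Proof.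
case: ifPn => xN.
  rewrite (bigD1 (Ordinal (xN : (x < N.+1)%N))) //= eqxx mulr1 big1 ?addr0 // => m.
  by move=> /eqP mx; rewrite eq_sym; case: eqP => [xm|]; rewrite ?mulr0 //; case: mx; apply: val_inj.
rewrite big1 // => m _; case: eqP => [xm|]; rewrite ?mulr0 //.
by move: xN; rewrite xm -ltnS ltn_ord.
Qed.

Definition Eset (N : nat) (n : {ffun 'I_q -> 'I_N.+1}) : set T :=
  \bigcap_j (X j @^-1` [set (n j : nat)]).

Lemma Eset_measurable N n : measurable (Eset (N:=N) n).
Proof.
apply: fin_bigcap_measurable; first exact: finite_finset.
by move=> j _; apply: measurable_funPTI.
Qed.

Lemma prod_ind N (n : {ffun 'I_q -> 'I_N.+1}) w :
  \prod_j ((X j w == n j)%:R : R) = \1_(Eset n) w.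
Proof.
rewrite indicE; case: (pickP (fun j => X j w != n j)) => [j /= Hj | Hall].
  rewrite (bigD1 j) //= (negbTE Hj) mul0r; case: (boolP (w \in Eset n)) => //.
  rewrite inE => H; move: (H j I) => /= Hx; by rewrite Hx eqxx in Hj.
rewrite big1; last by move=> j _; move: (Hall j) => /= /negbFE ->.
suff -> : w \in Eset n by [].
by rewrite inE => j _ /=; move: (Hall j) => /= /negbFE /eqP.
Qed.

Lemma indic_ge0' (A : set T) w : (0:R) <= \1_A w.
Proof. by rewrite indicE ler0n. Qed.

Lemma int_fN (c : 'I_q -> R) (c0 : forall j, 0 <= c j) N :
  (\int[P]_w (\prod_j \sum_(m < N.+1) c j ^+ m * (X j w == m)%:R)%:E =
   (\prod_j \sum_(m < N.+1) c j ^+ m * poisson_pmf (lam j) m)%:E)%E.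
Proof.
have E1 : forall w, \prod_j \sum_(m < N.+1) c j ^+ m * (X j w == m)%:R =
    \sum_(n : {ffun 'I_q -> 'I_N.+1}) (\prod_j c j ^+ n j) * \1_(Eset n) w.
  move=> w; rewrite bigA_distr_bigA; apply: eq_bigr => n _.
  by rewrite big_split /= prod_ind.
under eq_integral do rewrite E1 -sumEFin.
rewrite ge0_integral_sum //; last 2 first.
- move=> n; apply/measurable_EFinP; apply: measurable_funM => //.
  exact: measurable_indic (Eset_measurable n).
- move=> n w _; rewrite lee_fin; apply: mulr_ge0; last exact: indic_ge0'.
  by apply: prodr_ge0 => j _; apply: exprn_ge0.
rewrite bigA_distr_bigA -sumEFin; apply: eq_bigr => n _.
rewrite (eq_integral (fun w => ((\prod_j c j ^+ n j)%:E * (\1_(Eset n) w)%:E)%E)); last first.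
  by move=> w _; rewrite EFinM.
rewrite ge0_integralZl //; last 2 first.
- apply/measurable_EFinP; exact: measurable_indic (Eset_measurable n).
- by rewrite lee_fin; apply: prodr_ge0 => j _; apply: exprn_ge0.
rewrite integral_indic ?Eset_measurable //.
have -> : Eset n `&` [set: T] = Eset n by apply/seteqP; split => x //; case.
transitivity ((\prod_j c j ^+ n j)%:E * \prod_j (poisson_pmf (lam j) (n j))%:E)%E.
  congr (_ * _)%E.
  transitivity (\prod_j P (X j @^-1` [set (n j : nat)]))%E; first exact: HI.
  by apply: eq_bigr => j _; rewrite HX.
by rewrite prodEFin -EFinM big_split.
exact: Eset_measurable.
Qed.

Lemma cvg_prod_seq (s : seq 'I_q) (u : 'I_q -> nat -> R) (L : 'I_q -> R) :
  (forall j, u j @ \oo --> L j) ->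
  (fun N => \prod_(j <- s) u j N) @ \oo --> \prod_(j <- s) L j.
Proof.
move=> H; elim: s => [|j s IH].
  rewrite big_nil; under eq_fun do rewrite big_nil; exact: cvg_cst.
rewrite big_cons; under eq_fun do rewrite big_cons.
exact: cvgM.
Qed.

Lemma E_prod (c : 'I_q -> R) (c0 : forall j, 0 <= c j) :
  ('E_P[(fun w => \prod_j c j ^+ X j w)%R] = (\prod_j expR (lam j * (c j - 1)))%R%:E)%E.
Proof.
pose g := fun N w => (\prod_j \sum_(m < N.+1) c j ^+ m * (X j w == m)%:R)%:E.
have Hlim : forall w, (\prod_j c j ^+ X j w)%:E = limn (g^~ w).
  move=> w; apply/esym/lim_near_cst => //.
  near=> N.
  have HN : (\max_j X j w <= N)%N by near: N; exact: nbhs_infty_ge.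
  rewrite /g; congr (_%:E); apply: eq_bigr => j _.
  by rewrite sum_ind (leq_trans (leq_bigmax j) HN).
rewrite unlock (eq_integral (fun w => limn (g^~ w))); last by move=> w _; rewrite Hlim.
rewrite monotone_convergence //; last 3 first.
- move=> N; apply/measurable_EFinP; apply: measurable_prod => j _.
  apply: measurable_sum => m.
  exact: (measurable_natfun (fun x : nat => c j ^+ m * (x == m)%:R) j).
- move=> N w _; rewrite lee_fin; apply: prodr_ge0 => j _; apply: sumr_ge0 => m _.
  by apply: mulr_ge0; [exact: exprn_ge0 | exact: ler0n].
- move=> w _ N M NM; rewrite lee_fin; apply: ler_prod => j _; apply/andP; split.
    by apply: sumr_ge0 => m _; apply: mulr_ge0; [exact: exprn_ge0 | exact: ler0n].
  rewrite !sum_ind; case: ifP => h1; first by rewrite (leq_trans h1 NM).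
  by case: ifP => // _; exact: exprn_ge0.
under eq_fun do rewrite int_fN //.
have Hc : (fun N => \prod_j \sum_(m < N.+1) c j ^+ m * poisson_pmf (lam j) m) @ \oo -->
    \prod_j expR (lam j * (c j - 1)).
  apply: (cvg_prod_seq (u := fun j N => \sum_(m < N.+1) c j ^+ m * poisson_pmf (lam j) m)) => j.
  have := @cvg_pois_series R (lam j) (c j) (lam0 j); rewrite -cvg_shiftS; exact.
rewrite -[X in limn X]/(EFin \o (fun N => \prod_j \sum_(m < N.+1) c j ^+ m * poisson_pmf (lam j) m)).
rewrite EFin_lim; last exact: cvgP Hc.
by rewrite (cvg_lim _ Hc).
Unshelve. all: by end_near. Qed.

Lemma KY_formula l (A : 'M[bool]_(l, q)) (t : 'rV[R]_l) :
  KY A X t = \sum_j lam j * (expR (sj A t j) - 1).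
Proof.
rewrite /KY.
have -> : (fun w => expR (\sum_i t 0 i * (Yvec A X i w)%:R)) =
    (fun w => \prod_j (expR (sj A t j)) ^+ X j w).
  apply/funext => w; under [RHS]eq_bigr do rewrite -expRM_natr.
  rewrite -expR_sum; congr expR.
  rewrite /Yvec /sj.
  under eq_bigr do rewrite natr_sum mulr_sumr.
  rewrite exchange_big /=; apply: eq_bigr => j _.
  rewrite mulr_suml; apply: eq_bigr => i _.
  by rewrite natrM mulrA.
rewrite E_prod; last by move=> j; exact: expR_ge0.
by rewrite /= -expR_sum expRK.
Qed.
End E.
Section Comb.
Variable l : nat.
Implicit Types v w z : bvec l.

Definition bcard v := #|[pred i | v i]|.

Lemma ble_refl v : ble v v.
Proof. by apply/forallP => i; apply/implyP. Qed.

Lemma ble_trans u v w : ble u v -> ble v w -> ble u w.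
Proof.
move=> /forallP H1 /forallP H2; apply/forallP => i; apply/implyP => ui.
by move: (H1 i) (H2 i); rewrite ui /= => vi; rewrite vi.
Qed.

Lemma ble_anti v w : ble v w -> ble w v -> v = w.
Proof.
move=> /forallP H1 /forallP H2; apply/ffunP => i.
by move: (H1 i) (H2 i); case: (v i); case: (w i).
Qed.

Lemma ble_card v w : ble v w -> (bcard v <= bcard w)%N.
Proof.
move=> /forallP H; apply: subset_leq_card; apply/fintype.subsetP => i; rewrite !inE => vi.
by move: (H i); rewrite vi.
Qed.

Lemma blt_card v w : blt v w -> (bcard v < bcard w)%N.
Proof.
move=> /andP[H1 H2]; apply: proper_card; rewrite properE; apply/andP; split.
  by apply/fintype.subsetP => i; rewrite !inE => vi; move/forallP: H1 => /(_ i); rewrite vi.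
apply/negP => /fintype.subsetP H3; move/negP: H2; apply; apply/eqP; apply: ble_anti => //.
by apply/forallP => i; apply/implyP => wi; move: (H3 i); rewrite !inE; apply.
Qed.

Lemma bzero_ble v : ble (bzero l) v.
Proof. by apply/forallP => i; rewrite ffunE. Qed.

Definition bdel w i : bvec l := [ffun k => w k && (k != i)].

Lemma bdel_succ w i : w != bzero l -> w i -> is_succ (bdel w i) w.
Proof.
move=> w0 wi.
have Hle : ble (bdel w i) w by apply/forallP => k; rewrite ffunE; apply/implyP => /andP[].
have Hne : bdel w i != w by apply/eqP => /ffunP /(_ i); rewrite ffunE eqxx andbF wi.
have Hc : bcard w = (bcard (bdel w i)).+1.
  rewrite /bcard (cardD1 i) inE wi add1n; congr _.+1; apply: eq_card => k.
  by rewrite !inE ffunE andbC.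
rewrite /is_succ w0 /blt Hle Hne /=; apply/negP => /existsP[z /and3P[_ h1 h2]].
have := blt_card h1; have := blt_card h2; rewrite Hc ltnS => a b.
by have := leq_trans b a; rewrite ltnn.
Qed.

End Comb.

Section Alg.
Variables (R : realType) (l : nat) (ph : bvec l -> R).

Definition fstep v := fun (s : seq (bvec l) * seq (bvec l * R)) (w : bvec l) =>
  if is_succ v w && (0 < ph w) && (w \notin map fst s.2)
  then (rcons s.1 w, rcons s.2 (w, ph w)) else s.

Lemma fold_spec v ws (Q0 : seq (bvec l)) (V0 : seq (bvec l * R)) :
  let r := foldl (fstep v) (Q0, V0) ws in
  exists added, [/\ r.1 = Q0 ++ added, r.2 = V0 ++ [seq (w, ph w) | w <- added],
     uniq added, (forall w, w \in added -> [&& is_succ v w, 0 < ph w & w \notin map fst V0])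
     & (forall w, w \in ws -> is_succ v w -> 0 < ph w -> w \in map fst r.2)].
Proof.
elim: ws Q0 V0 => [|w ws IH] Q0 V0 /=.
  by exists [::]; split; rewrite ?cats0.
case hc: (is_succ v w && (0 < ph w) && (w \notin map fst V0)).
  have -> : fstep v (Q0, V0) w = (rcons Q0 w, rcons V0 (w, ph w)) by rewrite /fstep /= hc.
  move/andP: hc => [/andP[hs hp] hn].
  have [added [e1 e2 u ha hw]] := IH (rcons Q0 w) (rcons V0 (w, ph w)).
  exists (w :: added); split.
  - by rewrite e1 cat_rcons.
  - by rewrite e2 cat_rcons.
  - rewrite /= u andbT; apply/negP => wa; have := ha w wa.
    by rewrite map_rcons mem_rcons mem_head !andbF.
  - move=> w'; rewrite inE => /orP[/eqP -> | wa]; first by rewrite hs hp hn.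
    have := ha w' wa; rewrite map_rcons mem_rcons inE negb_or.
    by case/and3P => -> -> /andP[_ ->].
  - move=> w'; rewrite inE => /orP[/eqP -> | wa]; last exact: hw.
    by move=> _ _; rewrite e2 map_cat map_rcons mem_cat mem_rcons mem_head.
have -> : fstep v (Q0, V0) w = (Q0, V0) by rewrite /fstep /= hc.
have [added [e1 e2 u ha hw]] := IH Q0 V0.
exists added; split => //.
move=> w'; rewrite inE => /orP[/eqP -> | wa]; last exact: hw.
move=> hs hp; move/negbT: hc; rewrite hs hp /= negbK => hm.
by rewrite e2 map_cat mem_cat hm.
Qed.

Lemma alg_step_cons v Q V : alg_step ph (v :: Q, V) = foldl (fstep v) (Q, V) (enum (bvec l)).
Proof. by []. Qed.

Lemma mapfst_added (s : seq (bvec l)) : map fst [seq (w, ph w) | w <- s] = s.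
Proof. by elim: s => //= w s ->. Qed.

Definition Inv n (st : seq (bvec l) * seq (bvec l * R)) :=
  exists Pr, [/\ bzero l :: map fst st.2 = Pr ++ st.1, uniq (bzero l :: map fst st.2),
   (forall p, p \in st.2 -> p.2 = ph p.1 /\ 0 < ph p.1),
   (forall v w, v \in Pr -> is_succ v w -> 0 < ph w -> w \in map fst st.2)
   & (st.1 = [::] \/ size Pr = n)].

Lemma inv_state n : Inv n (alg_state ph n).
Proof.
rewrite /Inv; elim: n => [|n [Pr [ha hb hc hd he]]].
  by exists [::]; split => //; right.
have -> : alg_state ph n.+1 = alg_step ph (alg_state ph n) by [].
move: ha hb hc hd he; case: (alg_state ph n) => Qs Vs /= ha hb hc hd he.
case: Qs ha he => [|v Q] ha he.
  by exists Pr; split => //; left.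
rewrite alg_step_cons.
have [added [e1 e2 u hadd hw]] := fold_spec v (enum (bvec l)) Q Vs.
exists (rcons Pr v); rewrite e1 e2; split.
- by rewrite map_cat mapfst_added -cat_cons ha cat_rcons -catA.
- rewrite map_cat mapfst_added mem_cat negb_or cat_uniq u andbT.
  move/andP: hb => [h0 hS]; rewrite h0 hS /=.
  apply/andP; split.
    by apply/negP => /hadd /and3P[/andP[hs _] _ _]; rewrite eqxx in hs.
  by apply/hasPn => w /hadd /and3P[_ _ hn].
- move=> p; rewrite mem_cat => /orP[/hc // | /mapP[w /hadd /and3P[_ hp _] ->]] /=.
  by [].
- move=> v' w; rewrite mem_rcons inE => /orP[/eqP -> | hv] hs hp.
    by have := hw w (mem_enum _ w) hs hp; rewrite e2.
  by rewrite map_cat mem_cat (hd v' w hv hs hp).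
- by right; case: he => // <-; rewrite size_rcons.
Qed.

Lemma alg_terminates : exists n, (alg_state ph n).1 = [::].
Proof.
exists (#|bvec l|.+1); have [Pr [ha hb _ _ he]] := inv_state (#|bvec l|.+1).
case: he => // hs; exfalso.
have h1 : (size Pr <= size (bzero l :: map fst (alg_state ph #|bvec l|.+1).2))%N.
  by rewrite ha size_cat leq_addr.
have h2 := max_card (mem (bzero l :: map fst (alg_state ph #|bvec l|.+1).2)).
move/card_uniqP: hb => hb; rewrite hb in h2.
by have := leq_trans h1 h2; rewrite hs ltnn.
Qed.
End Alg.

Section Final.
Variables (R : realType) (l q : nat) (A : 'M[bool]_(l, q)) (lam : 'I_q -> R)
  (ph : bvec l -> R).
Hypotheses (lam0 : forall j, 0 < lam j) (injA : injective (bcol A))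
  (nzA : forall j, bcol A j != bzero l)
  (Hph : forall v, v != bzero l -> ph v = \sum_j lam j * (ble v (bcol A j))%:R).

Lemma ph_mono u w : u != bzero l -> w != bzero l -> ble u w -> ph w <= ph u.
Proof.
move=> u0 w0 uw; rewrite !Hph //; apply: ler_sum => j _.
apply: ler_wpM2l; first exact: ltW.
case h: (ble w (bcol A j)); last exact: ler0n.
by rewrite (ble_trans uw h).
Qed.

Lemma ph_col j : lam j <= ph (bcol A j).
Proof.
rewrite Hph // (bigD1 j) //= ble_refl mulr1 lerDl; apply: sumr_ge0 => k _.
by apply: mulr_ge0; [exact: ltW | exact: ler0n].
Qed.

Lemma exists_bit (w : bvec l) : w != bzero l -> exists i, w i.
Proof.
move=> w0; apply/existsP; apply: contraNT w0; rewrite negb_exists => /forallP H.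
by apply/eqP/ffunP => i; rewrite ffunE; apply/negbTE.
Qed.

Lemma reach n : (alg_state ph n).1 = [::] -> forall w, w != bzero l -> 0 < ph w ->
  w \in map fst (alg_state ph n).2.
Proof.
move=> hQ; have [Pr [ha hb hc hd _]] := inv_state ph n.
rewrite hQ cats0 in ha.
suff H : forall k w, (bcard w < k)%N -> w != bzero l -> 0 < ph w ->
    w \in map fst (alg_state ph n).2.
  by move=> w; apply: (H (bcard w).+1).
elim=> [//|k IH] w wk w0 pw.
have [i wi] := exists_bit w0.
have hs := bdel_succ w0 wi.
apply: (hd (bdel w i)) => //; rewrite -ha.
case: (eqVneq (bdel w i) (bzero l)) => [-> | v0]; first exact: mem_head.
have hlt : blt (bdel w i) w by move: hs => /and3P[].
rewrite inE; apply/orP; right; apply: IH => //.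
  by rewrite -ltnS (leq_trans _ wk) // ltnS blt_card.
by apply: (lt_le_trans pw); apply: ph_mono => //; move/andP: hlt => [].
Qed.

Definition rho (v : bvec l) : R :=
  match [pick j | bcol A j == v] with Some j => lam j | None => 0 end.

Lemma rhoE v : rho v = \sum_j lam j * (bcol A j == v)%:R.
Proof.
rewrite /rho; case: pickP => [j /eqP hj | hn].
  rewrite (bigD1 j) //= hj eqxx mulr1 big1 ?addr0 // => k hk.
  case: eqP => [hk' | _]; last by rewrite mulr0.
  by move: hk; rewrite -hj in hk'; rewrite (injA hk') eqxx.
by rewrite big1 // => j _; rewrite (negbTE (negbT (hn j))) mulr0.
Qed.

Lemma sum_nth_eq (s : seq (bvec l)) x (G : bvec l -> R) : uniq s -> x \in s ->
  \sum_(k < size s) (x == nth (bzero l) s k)%:R * G (nth (bzero l) s k) = G x.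
Proof.
move=> us xs; have xk : (index x s < size s)%N by rewrite index_mem.
rewrite (bigD1 (Ordinal xk)) //= nth_index // eqxx mul1r big1 ?addr0 // => k hk.
case: eqP => [hx|]; last by rewrite mul0r.
move/eqP: hk; case; apply: val_inj => /=; rewrite hx index_uniq //.
Qed.

Lemma MS_unit (S : seq (bvec l)) : uniq S -> MS R S \in unitmx.
Proof.
move=> uS; rewrite unitmxE unitfE; apply/det0P => [[v vn0 hv]].
move/eqP: vn0; apply; apply/matrixP => z m; rewrite (ord1 z) mxE.
suff H : forall n (m : 'I_(size S)), (bcard (nth (bzero l) S m) < n)%N -> v 0 m = 0.
  exact: (H (bcard (nth (bzero l) S m)).+1).
elim=> [//|n IH] {}m hm.
have := congr1 (fun M : 'M[R]_(1, size S) => M 0 m) hv; rewrite !mxE.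
rewrite (bigD1 m) //= mxE ble_refl mulr1 big1 ?addr0 // => k hk.
rewrite mxE; case h: (ble _ _); last by rewrite mulr0.
have hne : nth (bzero l) S k != nth (bzero l) S m.
  by rewrite nth_uniq //; apply: contra hk => /eqP e; apply/eqP/val_inj.
rewrite (IH k) ?mul0r //.
by rewrite -ltnS (leq_trans _ hm) // ltnS blt_card // /blt h hne.
Qed.

Lemma MS_rho (V : seq (bvec l * R)) : uniq (map fst V) ->
  (forall p, p \in V -> p.2 = ph p.1) ->
  (forall w, w \in map fst V -> w != bzero l) ->
  (forall j, bcol A j \in map fst V) ->
  MS R (map fst V) *m (\col_i rho (nth (bzero l) (map fst V) i)) =
  \col_(i < size (map fst V)) (nth (bzero l, 0) V i).2.
Proof.
move=> uS h2 h0 hA; apply/matrixP => i z; rewrite (ord1 z) !mxE.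
have hi : (i < size V)%N by rewrite -(size_map fst).
have eS : nth (bzero l) (map fst V) i = (nth (bzero l, 0) V i).1 by rewrite (nth_map (bzero l, 0)).
rewrite h2 ?mem_nth // -eS Hph; last by apply: h0; rewrite mem_nth.
under eq_bigr do rewrite !mxE rhoE mulr_sumr.
rewrite exchange_big /=; apply: eq_bigr => j _.
rewrite -(sum_nth_eq (fun y => lam j * (ble (nth (bzero l) (map fst V) i) y)%:R) uS (hA j)).
by apply: eq_bigr => k _; ring.
Qed.

Lemma psi_rho (V : seq (bvec l * R)) : uniq (map fst V) ->
  (forall p, p \in V -> p.2 = ph p.1) ->
  (forall w, w \in map fst V -> w != bzero l) ->
  (forall j, bcol A j \in map fst V) ->
  psi_vec V = \col_i rho (nth (bzero l) (map fst V) i).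
Proof.
move=> uS h2 h0 hA; rewrite /psi_vec -(MS_rho uS h2 h0 hA) mulKmx //.
exact: MS_unit.
Qed.
End Final.

Unset Implicit Arguments.
Local Close Scope classical_set_scope.
Local Open Scope ring_scope.

Theorem proposition6 (d : measure_display) (T : measurableType d)
  (R : realType) (P : probability T R) (l q : nat)
  (X : 'I_q -> {RV P >-> nat}) (lam : 'I_q -> R) (A : 'M[bool]_(l, q)) :
  (forall j, 0 < lam j) ->
  (forall j, is_poisson (lam j) (X j)) ->
  mutually_independent X ->
  injective (bcol A) ->
  (forall j, bcol A j != bzero l) ->
  let ph := phi (KY A X) in
  let rho := fun v : bvec l =>
    match [pick j | bcol A j == v] with Some j => lam j | None => 0 end in
  (exists n, (alg_state ph n).1 = [::]) /\
  forall n, (alg_state ph n).1 = [::] ->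
    let V := (alg_state ph n).2 in
    let S := map fst V in
    let psi := psi_vec V in
    (* (1) V = {(w, phi w) : w in B_0, phi w > 0} *)
    (forall p : bvec l * R,
        p \in V <-> [/\ p.1 != bzero l, 0 < ph p.1 & p.2 = ph p.1]) /\
    (* (2) hat A = A and psi = rho on A *)
    (forall v : bvec l,
        (exists i : 'I_(size S), nth (bzero l) S i = v /\ 0 < psi i 0) <->
        (exists j, bcol A j = v)) /\
    (forall (i : 'I_(size S)) (v : bvec l),
        nth (bzero l) S i = v -> (exists j, bcol A j = v) -> psi i 0 = rho v).
Proof.
move=> lam0 HX HI injA nzA ph rho.
have Hph : forall v, v != bzero l -> ph v = \sum_j lam j * (ble v (bcol A j))%:R.
  move=> v v0; rewrite /ph; apply: phi_formula => // t.
  exact: KY_formula.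
split; first exact: alg_terminates.
move=> n hQ V S psi.
have [Pr [ha hb hc hd _]] := inv_state ph n.
move: hb; rewrite /= => /andP[h0S uS].
have h0 : forall w, w \in S -> w != bzero l.
  by move=> w wS; apply: contraNneq h0S => <-.
have hA : forall j, bcol A j \in S.
  move=> j; apply: (reach lam0 Hph hQ (nzA j)); apply: (lt_le_trans (lam0 j)).
  exact: (ph_col lam0 nzA Hph).
have h2 : forall p, p \in V -> p.2 = ph p.1 by move=> p /hc [].
have Hpsi : psi = \col_i rho (nth (bzero l) S i).
  exact: (psi_rho injA Hph uS h2 h0 hA).
split.
  move=> p; split.
    move=> pV; have [e pos] := hc p pV; split => //.
    by apply: h0; apply: map_f.
  case=> p0 pp e; have := reach lam0 Hph hQ p0 pp; case/mapP => p' p'V e'.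
  have [e2 _] := hc p' p'V.
  by move: p0 pp e e' e2 p'V; case: p => a b; case: p' => a' b' /= _ _ -> -> ->.
split.
  move=> v; split.
    case=> i [e pos]; move: pos; rewrite Hpsi mxE e /rho.
    by case: pickP => [j /eqP hj _ | _]; [exists j | rewrite ltxx].
  case=> j e.
  have vS : v \in S by rewrite -e.
  have vk : (index v S < size S)%N by rewrite index_mem.
  exists (Ordinal vk); split; first by rewrite /= nth_index.
  rewrite Hpsi mxE /= nth_index // /rho.
  case: pickP => [j' _ | hn]; first exact: lam0.
  by have := hn j; rewrite e eqxx.
by move=> i v e _; rewrite Hpsi mxE e.
Qed.
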